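(* Let $\mathbf P=(P,\leq,{}',0,1)$ be an orthogonal lub-complete poset. Then the following conditions are equivalent: (i) $\mathbf P$ is a Boolean algebra. (ii) $\mathbf P$ satisfies $x\leq y$ if and only if $x\rightarrow_C y=1$ for all $x,y\in P$. (iii) $\mathbf P$ is an orthocomplemented poset such that there exists a binary operator $\odot_C$ such that $x\odot_C y\leq_1 z$ if and only if $x\leq_2 y\rightarrow_C z$ for all $x,y,z\in P$.
   Context: $(P,\leq,{}',0,1)$ is a bounded poset with an antitone involution ${}'$; orthogonal means $x\leq y'$ implies $x\vee y$ exists; lub-complete means for every lower bound $x$ of a finite subset $M$ there is a maximal lower bound of $M$ above $x$; orthocomplemented means $x\vee x'=1$ for all $x$. For $A\subseteq P$, $U(A)$ is the set of upper bounds, $U(x,y)=U(\{x,y\})$, $\mathrm{Min}\,A$ is the set of minimal elements of $A$. The classical implication is $x\rightarrow_C y:=\mathrm{Min}\,U(x',y)$; $x\rightarrow_C y=1$ means it equals $\{1\}$. $\odot_C$ is a map $P^2\to 2^P$. For $A,B\subseteq P$: $A\leq_1 B$ means for every $x\in A$ there is $y\in B$ with $x\leq y$; $A\leq_2 B$ means for every $y\in B$ there is $x\in A$ with $x\leq y$. *)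

(* Defs.v *)
From Stdlib Require Import List.
Set Implicit Arguments.
Unset Strict Implicit.

Section Defs.
Variable P : Type.
Variable le : P -> P -> Prop.
Variable c : P -> P.
Variable zero one : P.

Definition pset := P -> Prop.

Definition bounded_poset_inv : Prop :=
  (forall x, le x x) /\
  (forall x y, le x y -> le y x -> x = y) /\
  (forall x y z, le x y -> le y z -> le x z) /\
  (forall x, le zero x) /\ (forall x, le x one) /\
  (forall x y, le x y -> le (c y) (c x)) /\
  (forall x, c (c x) = x).

Definition is_join (x y s : P) : Prop :=
  le x s /\ le y s /\ (forall u, le x u -> le y u -> le s u).

Definition is_meet (x y m : P) : Prop :=
  le m x /\ le m y /\ (forall u, le u x -> le u y -> le u m).

Definition orthogonal : Prop :=
  forall x y, le x (c y) -> exists s, is_join x y s.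

Definition lower_bound (M : list P) (x : P) : Prop := forall m, In m M -> le x m.

Definition lub_complete : Prop :=
  forall (M : list P) x, lower_bound M x ->
    exists w, lower_bound M w /\ le x w /\
      (forall v, lower_bound M v -> le w v -> v = w).

Definition orthocomplemented : Prop := forall x, is_join x (c x) one.

Definition boolean_algebra : Prop :=
  exists (join meet : P -> P -> P),
    (forall x y, is_join x y (join x y)) /\
    (forall x y, is_meet x y (meet x y)) /\
    (forall x y z, join x (meet y z) = meet (join x y) (join x z)) /\
    (forall x, join x (c x) = one) /\
    (forall x, meet x (c x) = zero).

Definition upper (A : pset) : pset := fun u => forall a, A a -> le a u.
Definition Min (A : pset) : pset := fun w => A w /\ (forall v, A v -> le v w -> v = w).
Definition pair (x y : P) : pset := fun a => a = x \/ a = y.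
Definition single (x : P) : pset := fun a => a = x.

Definition implC (x y : P) : pset := Min (upper (pair (c x) y)).

(* A = 1, i.e. A = {1} *)
Definition is_one (A : pset) : Prop := forall w, A w <-> w = one.

Definition leq1 (A B : pset) : Prop := forall x, A x -> exists y, B y /\ le x y.
Definition leq2 (A B : pset) : Prop := forall y, B y -> exists x, A x /\ le x y.

End Defs.

(* Main.v *)
Require Import Defs.
From Stdlib Require Import List ClassicalEpsilon.

Theorem theorem3 (P : Type) (le : P -> P -> Prop) (c : P -> P) (zero one : P)
  (HP : bounded_poset_inv le c zero one)
  (Horth : orthogonal le c)
  (Hlub : lub_complete le) :
  (boolean_algebra le c zero one <->
     (forall x y, le x y <-> is_one one (implC le c x y))) /\
  ((forall x y, le x y <-> is_one one (implC le c x y)) <->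
     (orthocomplemented le c one /\
      exists odot : P -> P -> pset P,
        forall x y z,
          leq1 le (odot x y) (single z) <-> leq2 le (single x) (implC le c y z))).
Proof.
  destruct HP as (Hrefl & Hanti & Htr & H0 & H1 & Hc & Hcc).
  assert (c0 : c zero = one).
  { apply Hanti; [apply H1|]. rewrite <- (Hcc one). apply Hc. apply H0. }
  assert (c1 : c one = zero). { rewrite <- c0. apply Hcc. }
  assert (Hswap : forall x y, le x (c y) -> le y (c x)).
  { intros x y H. rewrite <- (Hcc y). apply Hc. exact H. }
  assert (Hswap2 : forall x y, le (c x) y -> le (c y) x).
  { intros x y H. rewrite <- (Hcc x). apply Hc. exact H. }
  assert (upP : forall a b u, upper le (pair a b) u <-> le a u /\ le b u).
  { intros a b u; unfold upper, pair; split.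
    - intros H; split; apply H; [left|right]; reflexivity.
    - intros [Ha Hb] z [-> | ->]; assumption. }
  assert (joinU : forall a b s t, is_join le a b s -> is_join le a b t -> s = t).
  { intros a b s t (Hs1 & Hs2 & Hs3) (Ht1 & Ht2 & Ht3). apply Hanti; auto. }
  assert (meetU : forall a b s t, is_meet le a b s -> is_meet le a b t -> s = t).
  { intros a b s t (Hs1 & Hs2 & Hs3) (Ht1 & Ht2 & Ht3). apply Hanti; auto. }
  assert (minjoin : forall a b s, is_join le a b s ->
            forall w, Min le (upper le (pair a b)) w <-> w = s).
  { intros a b s (Hs1 & Hs2 & Hs3) w; split.
    - intros [Hu Hm]. apply upP in Hu. destruct Hu as [Ha Hb].
      symmetry; apply Hm; [apply upP; auto | auto].
    - intros ->. split; [apply upP; auto|].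
      intros v Hv Hvs. apply upP in Hv. destruct Hv. apply Hanti; auto. }
  assert (compl0 : orthocomplemented le c one -> forall v a, le v a -> le v (c a) -> v = zero).
  { intros Oc v a Hva Hvca.
    assert (E : c v = one).
    { apply Hanti; [apply H1|]. apply (proj2 (proj2 (Oc a))).
      - apply Hswap. exact Hvca.
      - apply Hc. exact Hva. }
    rewrite <- (Hcc v), E. exact c1. }
  set (C2 := forall x y, le x y <-> is_one one (implC le c x y)).
  set (Dp := forall a b, (forall v, le v a -> le v (c b) -> v = zero) -> le a b).
  assert (HC2D : C2 -> Dp).
  { intros HC2 a b Hab. apply (proj2 (HC2 a b)). intros w. split.
    - intros [Hu _]. apply upP in Hu. destruct Hu as [Ha Hb].
      assert (E : c w = zero).
      { apply Hab; [apply Hswap2; exact Ha | apply Hc; exact Hb]. }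
      rewrite <- (Hcc w), E. exact c0.
    - intros ->. split; [apply upP; auto|].
      intros v Hv _. apply upP in Hv. destruct Hv as [Ha Hb].
      assert (E : c v = zero).
      { apply Hab; [apply Hswap2; exact Ha | apply Hc; exact Hb]. }
      rewrite <- (Hcc v), E. exact c0. }
  assert (HC2O : C2 -> orthocomplemented le c one).
  { intros HC2 x. split; [apply H1|split;[apply H1|]]. intros u Hxu Hcxu.
    pose proof (proj1 (HC2 x x) (Hrefl x)) as Hone.
    destruct (Hlub (x :: c x :: nil) (c u)) as (w & Hw & Hcuw & Hmax).
    { intros m [<- | [<- | []]]; [apply Hswap2; exact Hcxu | apply Hc; exact Hxu]. }
    assert (Hwx : le w x) by (apply Hw; simpl; auto).
    assert (Hwcx : le w (c x)) by (apply Hw; simpl; auto).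
    assert (Hi : implC le c x x (c w)).
    { split.
      - apply upP. split; [apply Hc; exact Hwx | apply Hswap; exact Hwcx].
      - intros v Hv Hvle. apply upP in Hv. destruct Hv as [Hv1 Hv2].
        assert (E : c v = w).
        { apply Hmax.
          - intros m [<- | [<- | []]]; [apply Hswap2; exact Hv1 | apply Hc; exact Hv2].
          - apply Hswap. exact Hvle. }
        rewrite <- E. symmetry. apply Hcc. }
    apply (proj1 (Hone _)) in Hi.
    rewrite <- Hi. apply Hswap2. exact Hcuw. }
  assert (HJM : orthocomplemented le c one -> Dp ->
     exists (J M : P -> P -> P), (forall x y, is_join le x y (J x y)) /\
                                 (forall x y, is_meet le x y (M x y))).
  { intros Oc D.
    assert (Hmeet : forall x y, exists m, is_meet le x y m).
    { intros x y. destruct (Hlub (x :: y :: nil) zero) as (w & Hw & _ & Hmax).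
      { intros m _; apply H0. }
      exists w. split; [apply Hw; simpl; auto|split;[apply Hw; simpl; auto|]].
      intros v Hvx Hvy. apply D. intros z Hzv Hzcw.
      destruct (Horth z w Hzcw) as [r (Hzr & Hwr & Hr)].
      assert (E : r = w).
      { apply Hmax; [|exact Hwr].
        intros m [<- | [<- | []]]; apply Hr.
        - apply Htr with v; auto.
        - apply Hw; simpl; auto.
        - apply Htr with v; auto.
        - apply Hw; simpl; auto. }
      subst r. apply (compl0 Oc z w); auto. }
    assert (Hjoin : forall x y, exists s, is_join le x y s).
    { intros x y. destruct (Hmeet (c x) (c y)) as [m (Hm1 & Hm2 & Hm3)].
      exists (c m). split; [apply Hswap; exact Hm1|split;[apply Hswap; exact Hm2|]].
      intros u Hxu Hyu. apply Hswap2. apply Hm3; apply Hc; auto. }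
    assert (Mf : forall x y, {m | is_meet le x y m}).
    { intros; apply constructive_indefinite_description; auto. }
    assert (Jf : forall x y, {m | is_join le x y m}).
    { intros; apply constructive_indefinite_description; auto. }
    exists (fun x y => proj1_sig (Jf x y)), (fun x y => proj1_sig (Mf x y)).
    split; intros x y; [apply (proj2_sig (Jf x y)) | apply (proj2_sig (Mf x y))]. }
  assert (HOD_B : orthocomplemented le c one -> Dp -> boolean_algebra le c zero one).
  { intros Oc D. destruct (HJM Oc D) as (J & M & HJ & HM).
    exists J, M. split; [exact HJ|]. split; [exact HM|]. split.
    - intros x y z. apply Hanti.
      + apply (HM _ _).
        * apply (HJ _ _); [apply (HJ x y)|]. apply Htr with y; [apply (HM y z)|apply (HJ x y)].
        * apply (HJ _ _); [apply (HJ x z)|]. apply Htr with z; [apply (HM y z)|apply (HJ x z)].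
      + set (R := J x (M y z)). set (L := M (J x y) (J x z)).
        apply D. intros v HvL HvcR.
        assert (HRcv : le R (c v)) by (apply Hswap; exact HvcR).
        assert (Hvcx : le v (c x)).
        { apply Hswap. apply Htr with R; auto. apply (HJ x (M y z)). }
        assert (Hvcm : le v (c (M y z))).
        { apply Hswap. apply Htr with R; auto. apply (HJ x (M y z)). }
        assert (claim : forall t, le L (J x t) -> le v t).
        { intros t HLt. apply D. intros z0 Hz0v Hz0ct.
          apply (compl0 Oc z0 (J x t)).
          - apply Htr with v; auto. apply Htr with L; auto.
          - apply Hswap. apply (HJ x t); apply Hswap; auto.
            apply Htr with v; auto. }
        apply (compl0 Oc v (M y z)); auto.
        apply (HM y z); apply claim; apply (HM (J x y) (J x z)).
    - split.
      + intros x. apply (joinU x (c x)); [apply HJ | apply Oc].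
      + intros x. apply (compl0 Oc _ x); apply (HM x (c x)). }
  assert (HB_C2 : boolean_algebra le c zero one -> C2).
  { intros (J & M & HJ & HM & Hd & Hjc & Hmc) x y.
    assert (Hi : forall w, implC le c x y w <-> w = J (c x) y) by (apply minjoin; apply HJ).
    unfold is_one. split.
    - intros Hxy w. rewrite Hi.
      cut (J (c x) y = one); [intros E; rewrite E; tauto|].
      apply Hanti; [apply H1|]. rewrite <- (Hjc x).
      apply (HJ x (c x)); [apply Htr with y; [auto|apply HJ] | apply HJ].
    - intros Hone.
      assert (E : J (c x) y = one) by (apply (proj1 (Hone (J (c x) y))); apply (proj2 (Hi _)); reflexivity).
      assert (E1 : J y zero = y).
      { apply (joinU y zero); [apply HJ|]. split; [auto|split; [auto|]]. auto. }
      assert (E2 : J y (c x) = one).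
      { rewrite <- E. apply (joinU y (c x)); [apply HJ|].
        destruct (HJ (c x) y) as (A1 & A2 & A3). split; [auto|split;[auto|]]. auto. }
      assert (E3 : forall a, M a one = a).
      { intros a. apply (meetU a one); [apply HM|]. split; [auto|split;[auto|]]. auto. }
      pose proof (Hd y x (c x)) as Hd'.
      rewrite Hmc, E1, E2, E3 in Hd'.
      rewrite Hd'. apply HJ. }
  assert (HC3_C2 : (orthocomplemented le c one /\
      exists odot : P -> P -> pset P,
        forall x y z,
          leq1 le (odot x y) (single z) <-> leq2 le (single x) (implC le c y z)) -> C2).
  { intros [Oc [odot Hod]] x y. split.
    - intros Hxy. unfold is_one, implC. apply minjoin.
      split; [apply H1|split;[apply H1|]]. intros u Hu1 Hu2.
      apply (Oc x); [apply Htr with y|]; auto.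
    - intros Hone.
      assert (S1 : leq1 le (odot (c y) x) (single y)).
      { apply Hod. intros w Hw. exists (c y). split; [reflexivity|].
        apply (proj1 (Hone w)) in Hw. rewrite Hw. apply H1. }
      assert (S2 : leq1 le (odot (c y) x) (single (c y))).
      { apply Hod. intros w [Hw _]. exists (c y). split; [reflexivity|].
        apply upP in Hw. apply Hw. }
      assert (S3 : leq1 le (odot (c y) x) (single zero)).
      { intros a Ha. exists zero. split; [reflexivity|].
        destruct (S1 a Ha) as [b1 [Hb1 Hl1]]. destruct (S2 a Ha) as [b2 [Hb2 Hl2]].
        unfold single in Hb1, Hb2. subst b1 b2.
        rewrite (compl0 Oc a y); auto. }
      apply Hod in S3.
      destruct (S3 (c x)) as [a [Ha Hle]].
      { apply (proj2 (minjoin (c x) zero (c x) ltac:(split; [auto|split;[auto|]]; auto) (c x))). reflexivity. }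
      unfold single in Ha. subst a.
      rewrite <- (Hcc x), <- (Hcc y). apply Hc. exact Hle. }
  split.
  - split; [exact HB_C2|]. intros HC2. apply HOD_B; [apply HC2O|apply HC2D]; exact HC2.
  - split; [|exact HC3_C2].
    intros HC2. pose proof (HC2O HC2) as Oc. pose proof (HC2D HC2) as D.
    split; [exact Oc|].
    destruct (HJM Oc D) as (J & M & HJ & HM).
    exists (fun x y => single (M x y)). intros x y z.
    assert (Hi : forall w, implC le c y z w <-> w = J (c y) z) by (apply minjoin; apply HJ).
    split.
    + intros H1'.
      destruct (H1' (M x y) eq_refl) as [b [Hb Hmz]]. unfold single in Hb. subst b.
      intros w Hw. apply Hi in Hw. subst w. exists x. split; [reflexivity|].
      apply D. intros v Hvx HvcJ.
      assert (Hvy : le v y).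
      { rewrite <- (Hcc y). apply Htr with (c (J (c y) z)); auto. apply Hc. apply HJ. }
      assert (Hvcz : le v (c z)).
      { apply Htr with (c (J (c y) z)); auto. apply Hc. apply HJ. }
      apply (compl0 Oc v z); auto.
      apply Htr with (M x y); auto. apply HM; auto.
    + intros H2'.
      destruct (H2' (J (c y) z)) as [a [Ha Hx]]; [apply Hi; reflexivity|].
      unfold single in Ha. subst a.
      intros a Ha. unfold single in Ha. subst a. exists z. split; [reflexivity|].
      apply D. intros v Hv1 Hv2.
      assert (Hvx : le v x) by (apply Htr with (M x y); auto; apply HM).
      assert (Hvy : le v y) by (apply Htr with (M x y); auto; apply HM).
      apply (compl0 Oc v (J (c y) z)).
      * apply Htr with x; auto.
      * apply Hswap. apply HJ; [apply Hc; auto | apply Hswap; auto].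
Qed.
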